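(* If $0\le r\le b-1$ then $\mathrm{Var}(\mu^{(r)})=r(1+b-r)$.
   Context: Fix an integer $b\ge2$. For $n\in\mathbb{N}$ with base-$b$ digits $n_k$, $s(n):=\sum_kn_k$. For $r,n\in\mathbb{N}$, $\Delta^{(r)}(n):=s(n+r)-s(n)$, and $\mu^{(r)}(d):=\lim_{N\to\infty}\frac1N|\{n<N:\Delta^{(r)}(n)=d\}|$ for $d\in\mathbb{Z}$; these limits exist and $\mu^{(r)}$ is a probability measure on $\mathbb{Z}$ with finite moments. $\mathrm{Var}(\mu^{(r)})$ is its variance. *)

(* Defs.v *)
From Stdlib Require Import Reals Lra Lia ZArith Arith List.
From Coquelicot Require Import Coquelicot.
Open Scope R_scope.

(* Base-b digit sum s(n), computed with fuel (n steps always suffice when b >= 2). *)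
Fixpoint digsum_fuel (b k n : nat) : nat :=
  match k with
  | O => O
  | S k' => (n mod b + digsum_fuel b k' (n / b))%nat
  end.

Definition s (b n : nat) : nat := digsum_fuel b n n.

Definition Delta (b r n : nat) : Z := (Z.of_nat (s b (n + r)) - Z.of_nat (s b n))%Z.

Definition count_Delta (b r : nat) (d : Z) (N : nat) : nat :=
  length (filter (fun n => Z.eqb (Delta b r n) d) (seq 0 N)).

(* mu^{(r)}(d) = lim_{N -> oo} (1/N) |{ n < N : Delta^{(r)}(n) = d }|
   (Coquelicot's total limit operator; the limit exists). *)
Definition mu (b r : nat) (d : Z) : R :=
  real (Lim_seq (fun N => INR (count_Delta b r d N) / INR N)).

Definition sumZ (f : Z -> R) : R :=
  Series (fun n => f (Z.of_nat n)) + Series (fun n => f (- Z.of_nat n - 1)%Z).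

Definition meanZ (m : Z -> R) : R := sumZ (fun d => IZR d * m d).
Definition varZ (m : Z -> R) : R :=
  sumZ (fun d => (IZR d - meanZ m) ^ 2 * m d).

(* Main.v *)
Require Import Defs.
From Stdlib Require Import Reals Lra Lia ZArith Arith List.
From Coquelicot Require Import Coquelicot.
Open Scope R_scope.

Lemma divmod_eq (b q a : nat) : (a < b)%nat -> ((b*q + a)/b = q /\ (b*q+a) mod b = a)%nat.
Proof. intros H; split; symmetry; [apply (Nat.div_unique _ _ _ a)|apply (Nat.mod_unique _ _ q)]; auto. Qed.

Fixpoint tz (b f m : nat) : nat :=
  match f with O => O | S f' => if Nat.eqb (m mod b) (b - 1) then S (tz b f' (m / b)) else O end.
Definition t b m := tz b m m.

Lemma tz_fuel b : (2 <= b)%nat -> forall f1 f2 m, (m <= f1)%nat -> (m <= f2)%nat -> tz b f1 m = tz b f2 m.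
Proof.
  intros Hb f1; induction f1 as [|f1 IH]; intros f2 m H1 H2.
  - assert (m = 0)%nat by lia; subst. destruct f2; simpl; auto.
    rewrite Nat.Div0.mod_0_l. replace (Nat.eqb 0 (b-1)) with false; auto.
    symmetry; apply Nat.eqb_neq; lia.
  - destruct f2 as [|f2].
    + assert (m = 0)%nat by lia; subst. simpl.
      rewrite Nat.Div0.mod_0_l. replace (Nat.eqb 0 (b-1)) with false; auto.
      symmetry; apply Nat.eqb_neq; lia.
    + simpl. destruct (Nat.eqb (m mod b) (b-1)); auto. f_equal.
      destruct m as [|m]. { rewrite Nat.Div0.div_0_l. apply IH; lia. }
      assert (S m / b < S m)%nat by (apply Nat.div_lt; lia).
      apply IH; lia.
Qed.

Lemma t_dec b q a : (2 <= b)%nat -> (a < b)%nat ->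
  t b (b*q + a) = if Nat.eqb a (b-1) then S (t b q) else O.
Proof.
  intros Hb Ha. destruct (divmod_eq b q a Ha) as [E1 E2].
  unfold t. remember (b*q+a)%nat as m.
  destruct m as [|m].
  - assert (q = 0 /\ a = 0)%nat as [-> ->] by nia. cbn [tz].
    replace (Nat.eqb 0 (b-1)) with false; auto. symmetry; apply Nat.eqb_neq; lia.
  - simpl. rewrite E2, E1. destruct (Nat.eqb a (b-1)) eqn:E; auto. f_equal.
    apply tz_fuel; auto. apply Nat.eqb_eq in E. nia.
Qed.

Lemma ds_fuel b : (2 <= b)%nat -> forall f1 f2 m, (m <= f1)%nat -> (m <= f2)%nat -> digsum_fuel b f1 m = digsum_fuel b f2 m.
Proof.
  intros Hb.
  assert (Z0 : forall f, digsum_fuel b f 0 = 0%nat).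
  { induction f; simpl; auto. rewrite Nat.Div0.mod_0_l, Nat.Div0.div_0_l, IHf. lia. }
  intros f1; induction f1 as [|f1 IH]; intros f2 m H1 H2.
  - assert (m = 0)%nat by lia; subst. rewrite Z0; auto.
  - destruct f2 as [|f2].
    + assert (m = 0)%nat by lia; subst. rewrite Z0; auto.
    + simpl. f_equal.
      destruct m as [|m]. { rewrite Nat.Div0.div_0_l, !Z0. auto. }
      assert (S m / b < S m)%nat by (apply Nat.div_lt; lia).
      apply IH; lia.
Qed.

Lemma s_dec b q a : (2 <= b)%nat -> (a < b)%nat -> s b (b*q + a) = (a + s b q)%nat.
Proof.
  intros Hb Ha. destruct (divmod_eq b q a Ha) as [E1 E2].
  unfold s. remember (b*q+a)%nat as m.
  destruct m as [|m].
  - assert (q = 0 /\ a = 0)%nat as [-> ->] by nia. simpl. auto.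
  - simpl. rewrite E2, E1. f_equal. apply ds_fuel; auto. nia.
Qed.

Lemma incr b : (2 <= b)%nat -> forall m, (s b (m+1) + (b-1) * t b m = s b m + 1)%nat.
Proof.
  intros Hb m. induction m as [m IH] using lt_wf_ind.
  pose (q := (m / b)%nat). pose (a := (m mod b)%nat).
  assert (Ha : (a < b)%nat) by (apply Nat.mod_upper_bound; lia).
  assert (Hm : m = (b*q+a)%nat) by (apply Nat.div_mod_eq).
  clearbody q a. subst m.
  rewrite t_dec, s_dec by lia.
  destruct (Nat.eqb a (b-1)) eqn:E.
  - apply Nat.eqb_eq in E.
    replace (b*q+a+1)%nat with (b*(q+1)+0)%nat by lia.
    rewrite s_dec by lia.
    assert (q < b*q+a)%nat by nia. specialize (IH q H).
    rewrite Nat.mul_succ_r. lia.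
  - apply Nat.eqb_neq in E.
    replace (b*q+a+1)%nat with (b*q+(a+1))%nat by lia.
    rewrite s_dec by lia. lia.
Qed.

Definition cr b r n := if Nat.ltb (n mod b + r) b then O else S (t b (n/b)).

Lemma delta_c b r n : (2 <= b)%nat -> (r <= b-1)%nat ->
  (s b (n+r) + (b-1) * cr b r n = s b n + r)%nat.
Proof.
  intros Hb Hr. unfold cr.
  pose (q := (n / b)%nat). pose (a := (n mod b)%nat).
  assert (Ha : (a < b)%nat) by (apply Nat.mod_upper_bound; lia).
  assert (Hm : n = (b*q+a)%nat) by (apply Nat.div_mod_eq).
  clearbody q a. subst n.
  destruct (divmod_eq b q a Ha) as [E1 E2]. rewrite E1, E2.
  rewrite (s_dec b q a) by lia.
  destruct (Nat.ltb (a + r) b) eqn:E.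
  - apply Nat.ltb_lt in E.
    replace (b*q+a+r)%nat with (b*q+(a+r))%nat by lia.
    rewrite s_dec by lia. lia.
  - apply Nat.ltb_ge in E.
    replace (b*q+a+r)%nat with (b*(q+1)+(a+r-b))%nat by nia.
    rewrite s_dec by lia. pose proof (incr b Hb q).
    rewrite Nat.mul_succ_r. lia.
Qed.

Lemma Delta_c b r n : (2 <= b)%nat -> (r <= b-1)%nat ->
  Defs.Delta b r n = (Z.of_nat r - Z.of_nat (b-1)%nat * Z.of_nat (cr b r n))%Z.
Proof.
  intros Hb Hr. unfold Defs.Delta. pose proof (delta_c b r n Hb Hr). lia.
Qed.

Definition cnt (P : nat -> bool) (N : nat) : nat := length (filter P (seq 0 N)).

Lemma cnt_S P N : cnt P (S N) = (cnt P N + (if P N then 1 else 0))%nat.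
Proof.
  unfold cnt. rewrite seq_S, filter_app, length_app. simpl. destruct (P N); simpl; lia.
Qed.

Lemma cnt_0 P : cnt P 0 = 0%nat.
Proof. reflexivity. Qed.

Lemma cnt_ext P Q N : (forall n, P n = Q n) -> cnt P N = cnt Q N.
Proof. intros H; induction N; auto. rewrite !cnt_S, IHN, H; auto. Qed.

Lemma cnt_le P N : (cnt P N <= N)%nat.
Proof. induction N; auto. rewrite cnt_S. destruct (P N); lia. Qed.

Lemma cnt_true N : cnt (fun _ => true) N = N.
Proof. induction N; auto. rewrite cnt_S, IHN. lia. Qed.

Lemma cnt_false N : cnt (fun _ => false) N = 0%nat.
Proof. induction N; auto. rewrite cnt_S, IHN. lia. Qed.

Lemma cnt_neg P N : (cnt (fun n => negb (P n)) N + cnt P N = N)%nat.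
Proof. induction N; auto. rewrite !cnt_S. destruct (P N); simpl; lia. Qed.

Lemma cnt_eq c N : cnt (fun n => Nat.eqb n c) N = (if Nat.ltb c N then 1 else 0)%nat.
Proof.
  induction N; auto. rewrite cnt_S, IHN.
  destruct (Nat.ltb_spec c N), (Nat.eqb_spec N c), (Nat.ltb_spec c (S N)); lia.
Qed.

Lemma cnt_lt K N : cnt (fun n => Nat.ltb n K) N = Nat.min N K.
Proof.
  induction N; auto. rewrite cnt_S, IHN.
  destruct (Nat.ltb_spec N K); lia.
Qed.


Lemma block_inner b (p q : nat -> bool) m : (0 < b)%nat ->
  cnt (fun n => andb (p (n mod b)%nat) (q (n / b)%nat)) (b*m) = (cnt p b * cnt q m)%nat ->
  forall j, (j <= b)%nat ->
  cnt (fun n => andb (p (n mod b)%nat) (q (n / b)%nat)) (b*m + j) =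
  (cnt p b * cnt q m + (if q m then cnt p j else 0))%nat.
Proof.
  intros Hb H0 j. induction j; intros Hj.
  - rewrite Nat.add_0_r, H0. destruct (q m); rewrite ?cnt_0; lia.
  - rewrite Nat.add_succ_r, cnt_S, IHj by lia.
    destruct (divmod_eq b m j ltac:(lia)) as [E1 E2]. rewrite E1, E2.
    rewrite cnt_S. destruct (q m), (p j); simpl; lia.
Qed.

Lemma block b (p q : nat -> bool) m : (0 < b)%nat ->
  cnt (fun n => andb (p (n mod b)%nat) (q (n / b)%nat)) (b*m) = (cnt p b * cnt q m)%nat.
Proof.
  intros Hb. induction m.
  - rewrite Nat.mul_0_r, !cnt_0. lia.
  - replace (b * S m)%nat with (b*m + b)%nat by lia.
    rewrite (block_inner b p q m Hb IHm b (le_n _)), cnt_S.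
    destruct (q m); lia.
Qed.

Lemma Rabs_le_inv x c : Rabs x <= c -> -c <= x <= c.
Proof. unfold Rabs; destruct (Rcase_abs x); lra. Qed.

Definition approx (P : nat -> bool) (a : R) :=
  exists C, forall N, Rabs (INR (cnt P N) - INR N * a) <= C.

Lemma approx_lim P a : approx P a ->
  is_lim_seq (fun N => INR (cnt P N) / INR N) a.
Proof.
  intros [C HC].
  assert (Hinv : is_lim_seq (fun n => / INR n) 0).
  { replace (Finite 0) with (Rbar_inv p_infty) by reflexivity.
    apply is_lim_seq_inv; [apply is_lim_seq_INR| discriminate]. }
  apply is_lim_seq_le_le_loc with (u := fun n => a - C * / INR n) (w := fun n => a + C * / INR n).
  - exists 1%nat. intros n Hn. specialize (HC n).
    assert (Hn' : 0 < INR n) by (apply lt_0_INR; lia).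
    apply Rabs_le_inv in HC.
    assert (E : INR (cnt P n) / INR n = a + (INR (cnt P n) - INR n * a) * / INR n)
      by (field; lra).
    rewrite E. pose proof (Rinv_0_lt_compat _ Hn').
    split; apply Rplus_le_compat_l; [ |apply Rmult_le_compat_r; lra].
    replace (- (C * / INR n)) with ((- C) * / INR n) by ring.
    apply Rmult_le_compat_r; lra.
  - replace (Finite a) with (Finite (a - C * 0)) by (f_equal; ring).
    apply (is_lim_seq_minus' (fun _ => a)); [apply is_lim_seq_const|].
    apply (is_lim_seq_scal_l _ C 0) in Hinv. simpl in Hinv. exact Hinv.
  - replace (Finite a) with (Finite (a + C * 0)) by (f_equal; ring).
    apply (is_lim_seq_plus' (fun _ => a)); [apply is_lim_seq_const|].
    apply (is_lim_seq_scal_l _ C 0) in Hinv. simpl in Hinv. exact Hinv.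
Qed.

Lemma approx_true : approx (fun _ => true) 1.
Proof. exists 0. intros N. rewrite cnt_true. rewrite Rmult_1_r, Rminus_diag, Rabs_R0. lra. Qed.

Lemma approx_prod b (p q : nat -> bool) a : (0 < b)%nat -> 0 <= a <= 1 -> approx q a ->
  approx (fun n => andb (p (n mod b)%nat) (q (n / b)%nat)) (INR (cnt p b) / INR b * a).
Proof.
  intros Hb Ha [C HC]. exists (INR b * C + 2 * INR b). intros N.
  pose (m := (N / b)%nat). pose (j := (N mod b)%nat).
  assert (Hj : (j < b)%nat) by (apply Nat.mod_upper_bound; lia).
  assert (HN : N = (b*m+j)%nat) by (apply Nat.div_mod_eq).
  clearbody m j. subst N.
  rewrite (block_inner b p q m Hb (block b p q m Hb) j) by lia.
  assert (Hbr : 0 < INR b) by (apply lt_0_INR; lia).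
  pose proof (cnt_le p b) as Hpb. apply le_INR in Hpb.
  assert (Hjb : INR j <= INR b) by (apply le_INR; lia).
  assert (HX : 0 <= INR (if q m then cnt p j else 0) <= INR b).
  { destruct (q m); split; try apply pos_INR; simpl; try lra.
    pose proof (cnt_le p j). apply le_INR in H. lra. }
  specialize (HC m).
  rewrite !plus_INR, !mult_INR.
  set (P := INR (cnt p b)). set (X := INR (if q m then cnt p j else 0)).
  set (G := INR (cnt q m)). fold P in Hpb.
  assert (E : P * G + X - (INR b * INR m + INR j) * (P / INR b * a)
     = P * (G - INR m * a) + (X - INR j * (P / INR b) * a)) by (field; lra).
  rewrite E.
  assert (HP0 : 0 <= P) by apply pos_INR.
  assert (Hpa : 0 <= P / INR b <= 1).
  { unfold Rdiv; split. apply Rmult_le_pos; [lra | left; apply Rinv_0_lt_compat; lra].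
    apply (Rmult_le_reg_r (INR b)); [lra|]. rewrite Rmult_assoc, Rinv_l; lra. }
  assert (Hj0 : 0 <= INR j) by apply pos_INR.
  assert (H2 : 0 <= INR j * (P / INR b) * a <= INR b).
  { split. apply Rmult_le_pos; [apply Rmult_le_pos|]; lra.
    apply Rle_trans with (INR j * 1 * 1); [|lra].
    apply Rmult_le_compat; try lra. apply Rmult_le_pos; lra.
    apply Rmult_le_compat; lra. }
  eapply Rle_trans; [apply Rabs_triang|].
  rewrite Rabs_mult, (Rabs_right P) by lra.
  assert (HC0 : 0 <= C) by (eapply Rle_trans; [apply Rabs_pos|apply HC]).
  apply Rplus_le_compat.
  - apply Rmult_le_compat; [lra|apply Rabs_pos|lra|exact HC].
  - apply Rabs_le. unfold X. lra.
Qed.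

Lemma approx_ext P Q a a' : (forall n, P n = Q n) -> a = a' -> approx P a -> approx Q a'.
Proof. intros H <- [C HC]; exists C; intros N; rewrite <- (cnt_ext P Q N H); auto. Qed.

Lemma t_eq b m : (2 <= b)%nat -> t b m = if Nat.eqb (m mod b) (b-1) then S (t b (m/b)) else O.
Proof.
  intros Hb. rewrite (Nat.div_mod_eq m b) at 1. apply t_dec; auto.
  apply Nat.mod_upper_bound; lia.
Qed.

Definition aT b k := INR (b-1) / INR b * (/ INR b) ^ k.
Definition aC b r k := match k with O => INR (b-r) / INR b | S k' => INR r / INR b * aT b k' end.

Lemma aT_bounds b k : (2 <= b)%nat -> 0 <= aT b k <= 1.
Proof.
  intros Hb. unfold aT.
  assert (H1 : 0 < INR b) by (apply lt_0_INR; lia).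
  assert (H2 : INR (b-1) <= INR b) by (apply le_INR; lia).
  assert (H3 : 0 <= INR (b-1)) by apply pos_INR.
  assert (H4 : 0 <= (/ INR b)^k <= 1).
  { assert (0 < / INR b <= 1).
    { split. apply Rinv_0_lt_compat; lra. rewrite <- Rinv_1. apply Rinv_le_contravar; try lra.
      replace 1 with (INR 1) by reflexivity. apply le_INR; lia. }
    split. apply pow_le; lra.
    induction k; simpl; [lra|]. replace 1 with (1*1) by ring.
    apply Rmult_le_compat; try lra. apply pow_le; lra. }
  assert (H5 : 0 <= INR (b-1) / INR b <= 1).
  { unfold Rdiv; split. apply Rmult_le_pos; [lra | left; apply Rinv_0_lt_compat; lra].
    apply (Rmult_le_reg_r (INR b)); [lra|]. rewrite Rmult_assoc, Rinv_l; lra. }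
  split. apply Rmult_le_pos; lra.
  replace 1 with (1*1) by ring. apply Rmult_le_compat; lra.
Qed.

Lemma cnt_eqb_bm1 b : (2 <= b)%nat -> cnt (fun a => Nat.eqb a (b-1)) b = 1%nat.
Proof. intros Hb. rewrite cnt_eq. destruct (Nat.ltb_spec (b-1) b); lia. Qed.

Lemma tk_approx b k : (2 <= b)%nat -> approx (fun m => Nat.eqb (t b m) k) (aT b k).
Proof.
  intros Hb. induction k.
  - eapply approx_ext; [| |apply (approx_prod b (fun a => negb (Nat.eqb a (b-1))) (fun _ => true) 1)];
      try lia; try apply approx_true; try lra.
    + intros n. rewrite (t_eq b n Hb). destruct (Nat.eqb _ _); reflexivity.
    + pose proof (cnt_neg (fun a => Nat.eqb a (b-1)) b) as E. rewrite cnt_eqb_bm1 in E by lia.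
      replace (cnt (fun a => negb (Nat.eqb a (b-1))) b) with (b-1)%nat by lia.
      unfold aT. simpl. ring.
  - eapply approx_ext; [| |apply (approx_prod b (fun a => Nat.eqb a (b-1)) (fun m => Nat.eqb (t b m) k) (aT b k))];
      try lia; try apply IHk; try (apply aT_bounds; lia).
    + intros n. rewrite (t_eq b n Hb). destruct (Nat.eqb _ _); reflexivity.
    + rewrite cnt_eqb_bm1 by lia. unfold aT. simpl. field.
      apply not_0_INR; lia.
Qed.

Lemma ck_approx b r k : (2 <= b)%nat -> (r <= b-1)%nat ->
  approx (fun n => Nat.eqb (cr b r n) k) (aC b r k).
Proof.
  intros Hb Hr. destruct k.
  - eapply approx_ext; [| |apply (approx_prod b (fun a => Nat.ltb a (b-r)) (fun _ => true) 1)];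
      try lia; try apply approx_true; try lra.
    + intros n. unfold cr. destruct (Nat.ltb_spec (n mod b + r) b), (Nat.ltb_spec (n mod b) (b-r)); simpl; auto; lia.
    + rewrite cnt_lt. replace (Nat.min b (b-r)) with (b-r)%nat by lia. simpl. ring.
  - eapply approx_ext; [| |apply (approx_prod b (fun a => negb (Nat.ltb a (b-r))) (fun m => Nat.eqb (t b m) k) (aT b k))];
      try lia; try apply tk_approx; try (apply aT_bounds; lia); auto.
    + intros n. unfold cr. destruct (Nat.ltb_spec (n mod b + r) b), (Nat.ltb_spec (n mod b) (b-r)); simpl; auto; lia.
    + pose proof (cnt_neg (fun a => Nat.ltb a (b-r)) b) as E. rewrite cnt_lt in E.
      replace (cnt (fun a => negb (Nat.ltb a (b-r))) b) with r by lia. reflexivity.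
Qed.

Lemma mu_val b r k : (2 <= b)%nat -> (r <= b-1)%nat ->
  mu b r (Z.of_nat r - Z.of_nat (b-1)%nat * Z.of_nat k)%Z = aC b r k.
Proof.
  intros Hb Hr. unfold mu.
  rewrite (Lim_seq_ext _ (fun N => INR (cnt (fun n => Nat.eqb (cr b r n) k) N) / INR N)).
  - rewrite (is_lim_seq_unique _ _ (approx_lim _ _ (ck_approx b r k Hb Hr))). reflexivity.
  - intros N. unfold count_Delta. fold (cnt (fun n => Z.eqb (Defs.Delta b r n) (Z.of_nat r - Z.of_nat (b-1)%nat * Z.of_nat k)%Z) N).
    f_equal. f_equal. apply cnt_ext. intros n. rewrite Delta_c by auto.
    destruct (Z.eqb_spec (Z.of_nat r - Z.of_nat (b - 1) * Z.of_nat (cr b r n)) (Z.of_nat r - Z.of_nat (b - 1) * Z.of_nat k)%Z),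
      (Nat.eqb_spec (cr b r n) k); auto; try nia.
Qed.

Lemma mu_zero b r d : (2 <= b)%nat -> (r <= b-1)%nat ->
  (forall k, d <> (Z.of_nat r - Z.of_nat (b-1)%nat * Z.of_nat k)%Z) -> mu b r d = 0.
Proof.
  intros Hb Hr H. unfold mu.
  rewrite (Lim_seq_ext _ (fun N => 0)).
  - rewrite Lim_seq_const. reflexivity.
  - intros N. unfold count_Delta. fold (cnt (fun n => Z.eqb (Defs.Delta b r n) d) N).
    rewrite (cnt_ext _ (fun _ => false)). rewrite cnt_false. simpl. unfold Rdiv; ring.
    intros n. rewrite Delta_c by auto. destruct (Z.eqb_spec (Z.of_nat r - Z.of_nat (b - 1) * Z.of_nat (cr b r n)) d); auto.
    exfalso. apply (H (cr b r n)). auto.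
Qed.

Ltac fixR := match goal with |- ?a = ?b => change (@eq R a b) end.

Fixpoint Kf (phi : nat -> nat) (N : nat) : nat :=
  match N with
  | O => O
  | S N' => if Nat.leb (phi (S (Kf phi N'))) (S N') then S (Kf phi N') else Kf phi N'
  end.

Lemma phi_mono (phi : nat -> nat) : (forall k, (phi k < phi (S k))%nat) ->
  forall j k, (j < k)%nat -> (phi j < phi k)%nat.
Proof.
  intros H j k Hjk. induction k. lia.
  destruct (Nat.eq_dec j k). subst; auto. specialize (H k). specialize (IHk ltac:(lia)). lia.
Qed.

Lemma Kf_inv (phi : nat -> nat) : (forall k, (phi k < phi (S k))%nat) -> forall N,
  (N < phi (S (Kf phi N)))%nat /\ ((phi O <= N)%nat -> (phi (Kf phi N) <= N)%nat) /\
  ((N < phi O)%nat -> Kf phi N = 0%nat).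
Proof.
  intros H. induction N as [|N [I1 [I2 I3]]].
  - simpl. specialize (H 0%nat). repeat split; lia.
  - simpl. destruct (Nat.leb_spec (phi (S (Kf phi N))) (S N)).
    + assert (E : phi (S (Kf phi N)) = S N) by lia.
      pose proof (H (S (Kf phi N))). pose proof (phi_mono phi H O (S (Kf phi N)) ltac:(lia)).
      repeat split; lia.
    + repeat split; try lia.
      intros. destruct (Nat.le_gt_cases (phi O) N). specialize (I2 H2). lia.
      rewrite (I3 H2). lia.
Qed.

Lemma sum_f_S (a : nat -> R) n : sum_n a (S n) = sum_n a n + a (S n).
Proof. rewrite !sum_n_Reals. reflexivity. Qed.
Lemma sum_f_0 (a : nat -> R) : sum_n a 0 = a 0%nat.
Proof. rewrite !sum_n_Reals. reflexivity. Qed.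

Lemma is_series_sparse (g : nat -> R) (phi : nat -> nat) (l : R) :
  (forall k, (phi k < phi (S k))%nat) -> (forall n, (forall k, phi k <> n) -> g n = 0) ->
  is_series (fun k => g (phi k)) l -> is_series g l.
Proof.
  intros Hm Hg Hs.
  pose proof (Kf_inv phi Hm) as I.
  assert (Hlow : forall N, (N < phi O)%nat -> sum_n g N = 0).
  { induction N; intros HN.
    - rewrite sum_f_0. apply Hg. intros k E. pose proof (Nat.le_gt_cases k 0).
      destruct k. lia. pose proof (phi_mono phi Hm O (S k) ltac:(lia)). lia.
    - rewrite sum_f_S, IHN by lia. rewrite (Hg (S N)). fixR; ring.
      intros k E. destruct k. lia. pose proof (phi_mono phi Hm O (S k) ltac:(lia)). lia. }
  assert (Hrel : forall N, (phi O <= N)%nat -> sum_n g N = sum_n (fun k => g (phi k)) (Kf phi N)).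
  { induction N; intros HN.
    - simpl. rewrite !sum_f_0. f_equal. lia.
    - destruct (Nat.eq_dec (phi O) (S N)) as [E|E].
      + rewrite sum_f_S, Hlow by lia.
        destruct (I (S N)) as [J1 [J2 J3]].
        assert (Kf phi (S N) = 0%nat).
        { destruct (Kf phi (S N)) eqn:EK; auto.
          pose proof (phi_mono phi Hm O (S n) ltac:(lia)). specialize (J2 ltac:(lia)). lia. }
        rewrite H, sum_f_0, E. fixR; ring.
      + rewrite sum_f_S, IHN by lia.
        destruct (I N) as [J1 [J2 J3]]. specialize (J2 ltac:(lia)).
        simpl. destruct (Nat.leb_spec (phi (S (Kf phi N))) (S N)).
        * rewrite sum_f_S. do 2 f_equal. lia.
        * rewrite (Hg (S N)). fixR; ring. intros k Ek.
          destruct (Nat.le_gt_cases k (Kf phi N)).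
          -- destruct (Nat.eq_dec k (Kf phi N)). subst. lia.
             pose proof (phi_mono phi Hm k (Kf phi N) ltac:(lia)). lia.
          -- destruct (Nat.eq_dec k (S (Kf phi N))). subst. lia.
             pose proof (phi_mono phi Hm (S (Kf phi N)) k ltac:(lia)). lia. }
  change (is_lim_seq (sum_n g) l).
  apply is_lim_seq_ext_loc with (u := fun N => sum_n (fun k => g (phi k)) (Kf phi N)).
  - exists (phi O). intros N HN. symmetry. apply Hrel; auto.
  - apply (is_lim_seq_subseq (sum_n (fun k => g (phi k))) l (Kf phi)); [|exact Hs].
    intros P [M HM]. exists (phi M). intros N HN. apply HM.
    destruct (Nat.le_gt_cases M (Kf phi N)); auto.
    destruct (I N) as [J1 _].
    destruct (Nat.eq_dec (S (Kf phi N)) M). subst; lia.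
    pose proof (phi_mono phi Hm (S (Kf phi N)) M ltac:(lia)). lia.
Qed.

Lemma fin_series (a : nat -> R) M : (forall n, (M < n)%nat -> a n = 0) -> is_series a (sum_n a M).
Proof.
  intros H. change (is_lim_seq (sum_n a) (sum_n a M)).
  apply is_lim_seq_ext_loc with (u := fun _ => sum_n a M); [|apply is_lim_seq_const].
  exists M. intros n Hn. induction n.
  - assert (M = 0%nat) by lia. subst; auto.
  - destruct (Nat.eq_dec M (S n)). subst; auto.
    rewrite sum_f_S, <- IHn by lia. rewrite (H (S n)) by lia. symmetry; apply Rplus_0_r.
Qed.

Lemma sum_rev (h : nat -> R) m : sum_n (fun n => h (m - n)%nat) m = sum_n h m.
Proof.
  induction m.
  - rewrite !sum_f_0. reflexivity.
  - rewrite !sum_n_Reals in *. rewrite decomp_sum by lia. simpl pred.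
    replace (S m - 0)%nat with (S m) by lia.
    rewrite (sum_eq _ (fun i => h (m - i)%nat)).
    + rewrite IHm. simpl. ring.
    + intros i Hi. f_equal.
Qed.

Lemma sumZ_shift (f : Z -> R) (r : nat) (L : R) :
  (forall d, (Z.of_nat r < d)%Z -> f d = 0) ->
  is_series (fun m => f (Z.of_nat r - Z.of_nat m)%Z) L -> sumZ f = L.
Proof.
  intros H0 HS. unfold sumZ.
  set (F := fun m : nat => f (Z.of_nat r - Z.of_nat m)%Z) in *.
  rewrite (is_series_unique _ _ (fin_series (fun n => f (Z.of_nat n)) r ltac:(intros n Hn; apply H0; lia))).
  assert (E : sum_n (fun n => f (Z.of_nat n)) r = sum_n F r).
  { rewrite <- sum_rev. apply sum_n_ext_loc. intros n Hn. unfold F. f_equal. lia. }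
  rewrite E.
  assert (HS2 : is_series (fun k => F (S r + k)%nat) (L - sum_n F r)).
  { apply is_series_incr_n. lia. simpl pred. match goal with |- is_series _ ?x => replace x with L; [exact HS|] end.
    unfold plus; simpl. unfold Rminus. rewrite Rplus_assoc, Rplus_opp_l, Rplus_0_r. reflexivity. }
  rewrite (is_series_unique _ (L - sum_n F r)).
  - fixR. ring.
  - eapply is_series_ext; [|exact HS2]. intros k. unfold F. f_equal. lia.
Qed.


Lemma inv_INR_S_lim : is_lim_seq (fun n => / INR (S n)) 0.
Proof.
  apply (is_lim_seq_incr_1 (fun n => / INR n)).
  replace (Finite 0) with (Rbar_inv p_infty) by reflexivity.
  apply is_lim_seq_inv; [apply is_lim_seq_INR| discriminate].
Qed.

Definition a1 q k := INR (S k) * q ^ k.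
Definition a2 q k := INR (S k) ^ 2 * q ^ k.

Lemma geo0 q : 0 < q < 1 -> is_series (fun k => q ^ k) (/ (1 - q)).
Proof. intros Hq. apply is_series_geom. rewrite Rabs_right; lra. Qed.

Lemma ratio_lim (e : nat) q : is_lim_seq (fun n => (1 + / INR (S n)) ^ e * q) q.
Proof.
  replace (Finite q) with (Finite ((1 + 0) ^ e * q)) by (f_equal; rewrite Rplus_0_r, pow1; ring).
  apply is_lim_seq_mult'; [|apply is_lim_seq_const].
  induction e.
  - simpl. apply is_lim_seq_const.
  - simpl. apply is_lim_seq_mult'; auto.
    apply is_lim_seq_plus'; [apply is_lim_seq_const|apply inv_INR_S_lim].
Qed.

Lemma ex_a (e : nat) q : 0 < q < 1 -> ex_series (fun k => INR (S k) ^ e * q ^ k).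
Proof.
  intros Hq. apply ex_series_Rabs. apply (ex_series_DAlembert _ q). lra.
  - intros n. apply Rmult_integral_contrapositive. split.
    apply pow_nonzero, not_0_INR; lia. apply pow_nonzero; lra.
  - apply is_lim_seq_ext with (u := fun n => (1 + / INR (S n)) ^ e * q); [|apply ratio_lim].
    intros n. assert (HS : 0 < INR (S n)) by (apply lt_0_INR; lia).
    assert (Hqn : 0 < q ^ n) by (apply pow_lt; lra).
    rewrite Rabs_right.
    + replace (INR (S (S n))) with (INR (S n) * (1 + / INR (S n))) by (rewrite (S_INR (S n)); field; lra).
      rewrite Rpow_mult_distr. change (q ^ S n) with (q * q ^ n). field. split; apply pow_nonzero; lra.
    + left. apply Rdiv_lt_0_compat; apply Rmult_lt_0_compat; try apply pow_lt; try apply lt_0_INR; try lia; lra.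
Qed.

Lemma geo1 q : 0 < q < 1 -> is_series (a1 q) (/ (1 - q) ^ 2).
Proof.
  intros Hq.
  assert (Ha : ex_series (a1 q)).
  { eapply ex_series_ext; [|apply (ex_a 1 q Hq)]. intros n. unfold a1. rewrite pow_1. reflexivity. }
  assert (Hg : ex_series (fun k => q ^ k)) by (eexists; apply geo0; auto).
  assert (E : Series (a1 q) = 1 + q * Series (a1 q) + q * / (1 - q)).
  { rewrite Series_incr_1 at 1 by auto.
    rewrite (Series_ext _ (fun k => q * a1 q k + q * q ^ k)).
    - rewrite Series_plus, !Series_scal_l.
      + replace (Series (pow q)) with (/ (1 - q)) by (symmetry; apply is_series_unique; apply geo0; auto).
        unfold a1. simpl. ring.
      + apply (ex_series_scal_l q _ Ha).
      + apply (ex_series_scal_l q _ Hg).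
    - intros n. unfold a1. rewrite !S_INR. simpl pow. ring. }
  replace (/ (1-q)^2) with (Series (a1 q)).
  - apply Series_correct; auto.
  - apply (Rmult_eq_reg_r (1 - q)); [|lra].
    assert (E2 : Series (a1 q) * (1 - q) = 1 + q / (1 - q)).
    { replace (Series (a1 q) * (1 - q)) with (Series (a1 q) - q * Series (a1 q)) by ring.
      rewrite E at 1. field. lra. }
    rewrite E2. field. lra.
Qed.

Lemma geo2 q : 0 < q < 1 -> is_series (a2 q) ((1 + q) / (1 - q) ^ 3).
Proof.
  intros Hq.
  assert (Ha : ex_series (a2 q)) by apply (ex_a 2 q Hq).
  assert (Ha1 : ex_series (a1 q)) by (eexists; apply geo1; auto).
  assert (Hg : ex_series (fun k => q ^ k)) by (eexists; apply geo0; auto).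
  assert (E : Series (a2 q) = 1 + q * Series (a2 q) + (2 * q * / (1 - q) ^ 2 + q * / (1 - q))).
  { rewrite Series_incr_1 at 1 by auto.
    rewrite (Series_ext _ (fun k => q * a2 q k + (2 * q * a1 q k + q * q ^ k))).
    - rewrite Series_plus, Series_plus, !Series_scal_l.
      + replace (Series (pow q)) with (/ (1 - q)) by (symmetry; apply is_series_unique; apply geo0; auto).
        rewrite (is_series_unique _ _ (geo1 q Hq)).
        unfold a2. simpl. ring.
      + apply (ex_series_scal_l (2 * q) _ Ha1).
      + apply (ex_series_scal_l q _ Hg).
      + apply (ex_series_scal_l q _ Ha).
      + apply (ex_series_plus _ _ (ex_series_scal_l (2 * q) _ Ha1) (ex_series_scal_l q _ Hg)).
    - intros n. unfold a1, a2. rewrite !S_INR. simpl pow. ring. }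
  replace ((1 + q) / (1 - q) ^ 3) with (Series (a2 q)).
  - apply Series_correct; auto.
  - apply (Rmult_eq_reg_r (1 - q)); [|lra].
    assert (E2 : Series (a2 q) * (1 - q) = 1 + (2 * q * / (1 - q) ^ 2 + q * / (1 - q))).
    { replace (Series (a2 q) * (1 - q)) with (Series (a2 q) - q * Series (a2 q)) by ring.
      rewrite E at 1. field. lra. }
    rewrite E2. field. lra.
Qed.

Lemma is_series_lin3 (u1 u2 u3 v : nat -> R) l1 l2 l3 c1 c2 c3 L :
  is_series u1 l1 -> is_series u2 l2 -> is_series u3 l3 ->
  (forall n, v n = c1 * u1 n + c2 * u2 n + c3 * u3 n) -> L = c1 * l1 + c2 * l2 + c3 * l3 ->
  is_series v L.
Proof.
  intros H1 H2 H3 Hv ->.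
  pose proof (is_series_plus _ _ _ _ (is_series_plus _ _ _ _ (is_series_scal c1 _ _ H1) (is_series_scal c2 _ _ H2)) (is_series_scal c3 _ _ H3)) as H.
  eapply is_series_ext; [|exact H]. intros n. rewrite Hv. reflexivity.
Qed.

Lemma is_series_cons (a : nat -> R) l L : is_series (fun k => a (S k)) l -> L = a 0%nat + l -> is_series a L.
Proof.
  intros H ->. apply is_series_decr_1.
  match goal with |- is_series _ ?x => replace x with l; [exact H|] end.
  unfold plus, opp; simpl. rewrite (Rplus_comm (a 0%nat) l), Rplus_assoc, Rplus_opp_r, Rplus_0_r. reflexivity.
Qed.

Lemma sumZ_mu b r h L : (2 <= b)%nat -> (r <= b-1)%nat ->
  is_series (fun k => h (Z.of_nat r - Z.of_nat (b-1)%nat * Z.of_nat k)%Z * aC b r k) L ->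
  sumZ (fun d => h d * mu b r d) = L.
Proof.
  intros Hb Hr HL. apply (sumZ_shift _ r).
  - intros d Hd. rewrite (mu_zero b r d Hb Hr). ring. intros k E. nia.
  - apply (is_series_sparse _ (fun k => ((b-1) * k)%nat)).
    + intros k. nia.
    + intros n Hn. rewrite (mu_zero b r _ Hb Hr). ring.
      intros k E. apply (Hn k). nia.
    + eapply is_series_ext; [|exact HL]. intros k. simpl.
      rewrite <- (mu_val b r k Hb Hr).
      replace (Z.of_nat r - Z.of_nat ((b - 1) * k))%Z with (Z.of_nat r - Z.of_nat (b-1)%nat * Z.of_nat k)%Z by lia.
      reflexivity.
Qed.

Lemma IZR_arg b r k : IZR (Z.of_nat r - Z.of_nat (b-1)%nat * Z.of_nat k)%Z = INR r - INR (b-1) * INR k.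
Proof. rewrite minus_IZR, mult_IZR, <- !INR_IZR_INZ. reflexivity. Qed.

Lemma mean0 b r : (2 <= b)%nat -> (r <= b-1)%nat -> meanZ (mu b r) = 0.
Proof.
  intros Hb Hr. unfold meanZ. apply sumZ_mu; auto.
  assert (Hb0 : 0 < INR b) by (apply lt_0_INR; lia).
  assert (Hb1 : INR (b-1) = INR b - 1) by (rewrite minus_INR by lia; reflexivity).
  assert (Hb2 : 1 < INR b) by (replace 1 with (INR 1) by reflexivity; apply lt_INR; lia).
  assert (Hq : 0 < / INR b < 1).
  { split. apply Rinv_0_lt_compat; lra. rewrite <- Rinv_1. apply Rinv_lt_contravar. lra.
    replace 1 with (INR 1) by reflexivity. apply lt_INR; lia. }
  eapply is_series_cons.
  - eapply (is_series_lin3 _ _ _ _ _ _ _ (INR r * INR (b-1) / INR b ^ 2 * INR r) (- (INR r * INR (b-1) / INR b ^ 2 * INR (b-1))) 0 _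
      (geo0 _ Hq) (geo1 _ Hq) (geo0 _ Hq)).
    + intros n. rewrite IZR_arg. simpl aC. unfold aT, a1. rewrite S_INR. field. lra.
    + reflexivity.
  - rewrite IZR_arg. simpl aC. rewrite (minus_INR b r) by lia. rewrite Hb1. simpl (INR 0). field. split; lra.
Qed.

Theorem mainTheorem11 (b r : nat) :
  (2 <= b)%nat -> (r <= b - 1)%nat ->
  varZ (mu b r) = INR r * (1 + INR b - INR r).
Proof.
  intros Hb Hr. unfold varZ. rewrite (mean0 b r Hb Hr).
  apply sumZ_mu; auto.
  assert (Hb0 : 0 < INR b) by (apply lt_0_INR; lia).
  assert (Hb1 : INR (b-1) = INR b - 1) by (rewrite minus_INR by lia; reflexivity).
  assert (Hb2 : 1 < INR b) by (replace 1 with (INR 1) by reflexivity; apply lt_INR; lia).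
  assert (Hq : 0 < / INR b < 1).
  { split. apply Rinv_0_lt_compat; lra. rewrite <- Rinv_1. apply Rinv_lt_contravar. lra.
    replace 1 with (INR 1) by reflexivity. apply lt_INR; lia. }
  set (c := INR r * INR (b-1) / INR b ^ 2).
  eapply is_series_cons.
  - eapply (is_series_lin3 _ _ _ _ _ _ _ (c * INR r ^ 2) (- (c * 2 * INR r * INR (b-1))) (c * INR (b-1) ^ 2) _
      (geo0 _ Hq) (geo1 _ Hq) (geo2 _ Hq)).
    + intros n. rewrite IZR_arg. simpl aC. unfold c, aT, a1, a2. rewrite S_INR. field. lra.
    + reflexivity.
  - rewrite IZR_arg. simpl aC. unfold c. rewrite (minus_INR b r) by lia. rewrite Hb1. simpl (INR 0). field. split; lra.
Qed.
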